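(* Let $\Gamma$ be a $g\mathbf{PAI}_0$-theory. For all formulas $\varphi,\psi$: $[N(\varphi)]_{\sim_\Gamma}\le_\oplus[N(\psi)]_{\sim_\Gamma}$ in the quotient algebra $\langle N[Fm]/{\sim_\Gamma},\oplus,\rhd\rangle$ if and only if $N(\varphi)\le_\Gamma N(\psi)$ (equivalently, iff $\varphi\prec\psi\in\Gamma$).
   Context: Language: fix a countable set $Var$ of variables; $Fm$ is the set of formulas built from $Var$ with unary $\neg,\Box$ and binary $\vee,\to$. Abbreviations: $\varphi\wedge\psi:=\neg(\neg\varphi\vee\neg\psi)$, $\varphi\supset\psi:=\neg\varphi\vee\psi$, $\varphi\equiv\psi:=(\varphi\supset\psi)\wedge(\psi\supset\varphi)$, $\varphi\prec\psi:=\psi\to(\varphi\vee\neg\varphi)$. $g\mathbf{PAI}_0$ is the Hilbert calculus with axiom schemes (A1) $\varphi\supset(\psi\supset\varphi)$; (A2) $(\varphi\supset(\psi\supset\chi))\supset((\varphi\supset\psi)\supset(\varphi\supset\chi))$; (A3) $(\neg\varphi\supset\neg\psi)\supset(\psi\supset\varphi)$; (A4) $(\varphi\to\psi)\equiv(\Box(\varphi\supset\psi)\wedge(\psi\prec\varphi))$; (K) $\Box(\varphi\supset\psi)\supset(\Box\varphi\supset\Box\psi)$; (T) $\Box\varphi\supset\varphi$; (4) $\Box\varphi\supset\Box\Box\varphi$; (O1) $\varphi\prec\varphi$; (O2) $((\varphi\prec\psi)\wedge(\psi\prec\chi))\supset(\varphi\prec\chi)$; (O3) $(\varphi\prec\psi)\supset((\varphi\vee\psi)\prec\psi)$;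 (O4) $((\varphi\prec\psi)\equiv(\varphi\prec\neg\psi))\wedge((\varphi\prec\psi)\equiv(\neg\varphi\prec\psi))$; (O5) $((\varphi\prec\psi)\equiv(\varphi\prec\Box\psi))\wedge((\varphi\prec\psi)\equiv(\Box\varphi\prec\psi))$; (C1) $(\varphi\prec(\varphi\vee\psi))\wedge(\psi\prec(\varphi\vee\psi))$; (C2) $((\varphi\prec\chi)\wedge(\psi\prec\chi))\supset((\varphi\vee\psi)\prec\chi)$; (C3) $((\varphi\prec\chi)\wedge(\chi\prec\varphi)\wedge(\psi\prec\zeta)\wedge(\zeta\prec\psi))\supset((\varphi\to\psi)\prec(\chi\to\zeta))$; rules (MP) from $\varphi,\varphi\supset\psi$ infer $\psi$, (Nec$_g$) from $\varphi$ infer $\Box\varphi$. A $g\mathbf{PAI}_0$-theory is a set of formulas closed under derivability in this calculus. $N$ is the map from $Fm$ onto the algebra of terms over $Var$ in binary symbols $\oplus,\rhd$ given by $N(p)=p$, $N(\neg\varphi)=N(\Box\varphi)=N(\varphi)$, $N(\varphi\vee\psi)=N(\varphi)\oplus N(\psi)$, $N(\varphi\to\psi)=N(\varphi)\rhd N(\psi)$; $N[Fm]$ is its image. For a theory $\Gamma$ define on $N[Fm]$: $N(\varphi)\le_\Gamma N(\psi)$ iff $\varphi\prec\psi\in\Gamma$ (this does not depend on the chosen preimages), and $N(\varphi)\sim_\Gamma N(\psi)$ iff $N(\varphi)\le_\Gamma N(\psi)$ and $N(\psi)\le_\Gamma N(\varphi)$; $\sim_\Gamma$ is a congruence of $\langle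 N[Fm],\oplus,\rhd\rangle$, and $\langle N[Fm]/{\sim_\Gamma},\oplus,\rhd\rangle$ is the quotient. On the quotient, $x\le_\oplus y$ iff $x\oplus y=y$. *)

(* Defs.v *)
Inductive Fm : Type :=
| FVar : nat -> Fm
| FNeg : Fm -> Fm
| FBox : Fm -> Fm
| FOr  : Fm -> Fm -> Fm
| FImp : Fm -> Fm -> Fm.

Definition FAnd (a b : Fm) : Fm := FNeg (FOr (FNeg a) (FNeg b)).
Definition FSup (a b : Fm) : Fm := FOr (FNeg a) b.
Definition FEqv (a b : Fm) : Fm := FAnd (FSup a b) (FSup b a).
Definition FPrec (a b : Fm) : Fm := FImp b (FOr a (FNeg a)).

Inductive IsAxiom : Fm -> Prop :=
| A1 a b : IsAxiom (FSup a (FSup b a))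
| A2 a b c : IsAxiom (FSup (FSup a (FSup b c)) (FSup (FSup a b) (FSup a c)))
| A3 a b : IsAxiom (FSup (FSup (FNeg a) (FNeg b)) (FSup b a))
| A4 a b : IsAxiom (FEqv (FImp a b) (FAnd (FBox (FSup a b)) (FPrec b a)))
| AK a b : IsAxiom (FSup (FBox (FSup a b)) (FSup (FBox a) (FBox b)))
| AT a : IsAxiom (FSup (FBox a) a)
| A4m a : IsAxiom (FSup (FBox a) (FBox (FBox a)))
| O1 a : IsAxiom (FPrec a a)
| O2 a b c : IsAxiom (FSup (FAnd (FPrec a b) (FPrec b c)) (FPrec a c))
| O3 a b : IsAxiom (FSup (FPrec a b) (FPrec (FOr a b) b))
| O4 a b : IsAxiom (FAnd (FEqv (FPrec a b) (FPrec a (FNeg b)))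
                       (FEqv (FPrec a b) (FPrec (FNeg a) b)))
| O5 a b : IsAxiom (FAnd (FEqv (FPrec a b) (FPrec a (FBox b)))
                       (FEqv (FPrec a b) (FPrec (FBox a) b)))
| C1 a b : IsAxiom (FAnd (FPrec a (FOr a b)) (FPrec b (FOr a b)))
| C2 a b c : IsAxiom (FSup (FAnd (FPrec a c) (FPrec b c)) (FPrec (FOr a b) c))
| C3 a b c d : IsAxiom (FSup (FAnd (FAnd (FAnd (FPrec a c) (FPrec c a)) (FPrec b d))
                                 (FPrec d b))
                           (FPrec (FImp a b) (FImp c d))).

Inductive Deriv (G : Fm -> Prop) : Fm -> Prop :=
| D_ax a : IsAxiom a -> Deriv G a
| D_hyp a : G a -> Deriv G a
| D_mp a b : Deriv G a -> Deriv G (FSup a b) -> Deriv G b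
| D_nec a : Deriv G a -> Deriv G (FBox a).

Definition is_theory (G : Fm -> Prop) : Prop := forall a, Deriv G a -> G a.

Inductive Tm : Type :=
| TVar : nat -> Tm
| TOplus : Tm -> Tm -> Tm
| TRhd : Tm -> Tm -> Tm.

Fixpoint N (a : Fm) : Tm :=
  match a with
  | FVar p => TVar p
  | FNeg a => N a
  | FBox a => N a
  | FOr a b => TOplus (N a) (N b)
  | FImp a b => TRhd (N a) (N b)
  end.

Definition inNFm (t : Tm) : Prop := exists a, N a = t.

Definition leG (G : Fm -> Prop) (t s : Tm) : Prop :=
  exists a b, N a = t /\ N b = s /\ G (FPrec a b).

Definition simG (G : Fm -> Prop) (t s : Tm) : Prop := leG G t s /\ leG G s t.

(** The quotient N[Fm]/~Γ: elements are equivalence classes, represented as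
    predicates on terms.  [t] = class of t. *)
Definition cls (G : Fm -> Prop) (t : Tm) : Tm -> Prop :=
  fun s => inNFm s /\ simG G t s.

(** ⊕ on the quotient: [x] ⊕ [y] = [x ⊕ y], computed from arbitrary
    representatives. *)
Definition qoplus (G : Fm -> Prop) (X Y : Tm -> Prop) : Tm -> Prop :=
  fun s => exists x y, X x /\ Y y /\ cls G (TOplus x y) s.

Definition qle (G : Fm -> Prop) (X Y : Tm -> Prop) : Prop := qoplus G X Y = Y.

(* Main.v *)
Require Import Defs.
From Stdlib Require Import FunctionalExtensionality PropExtensionality.

Inductive PD (H : Fm -> Prop) : Fm -> Prop :=
| P1 a b : PD H (FSup a (FSup b a))
| P2 a b c : PD H (FSup (FSup a (FSup b c)) (FSup (FSup a b) (FSup a c)))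
| P3 a b : PD H (FSup (FSup (FNeg a) (FNeg b)) (FSup b a))
| Ph a : H a -> PD H a
| Pmp a b : PD H a -> PD H (FSup a b) -> PD H b.

Definition ext (H : Fm -> Prop) (h : Fm) : Fm -> Prop := fun x => H x \/ x = h.

Lemma PD_id H a : PD H (FSup a a).
Proof.
  eapply Pmp. apply (P1 H a a).
  eapply Pmp. apply (P1 H a (FSup a a)).
  apply P2.
Qed.

Lemma PD_mono H H' a : (forall x, H x -> H' x) -> PD H a -> PD H' a.
Proof.
  intros HH D; induction D.
  - apply P1.
  - apply P2.
  - apply P3.
  - apply Ph; auto.
  - eapply Pmp; [exact IHD1|exact IHD2].
Qed.

Lemma lift H h a : PD H a -> PD (ext H h) a.
Proof. apply PD_mono. unfold ext; auto. Qed.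

Lemma hh H h : PD (ext H h) h.
Proof. apply Ph. right; reflexivity. Qed.

Lemma ded H h b : PD (ext H h) b -> PD H (FSup h b).
Proof.
  intro D; induction D.
  - eapply Pmp. apply P1. apply P1.
  - eapply Pmp. apply P2. apply P1.
  - eapply Pmp. apply P3. apply P1.
  - destruct H0 as [H0|H0].
    + eapply Pmp. apply Ph; exact H0. apply P1.
    + subst. apply PD_id.
  - eapply Pmp. exact IHD1. eapply Pmp. exact IHD2. apply P2.
Qed.

Lemma exfalso H a b : PD H (FSup (FNeg a) (FSup a b)).
Proof.
  apply ded. eapply Pmp. 2: apply P3.
  eapply Pmp. apply hh. apply P1.
Qed.

Lemma dne H a : PD H (FSup (FNeg (FNeg a)) a).
Proof.
  apply ded. eapply Pmp. apply hh.
  eapply Pmp. 2: apply (P3 _ a (FNeg (FNeg a))).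
  eapply Pmp. 2: apply (P3 _ (FNeg (FNeg (FNeg a))) (FNeg a)).
  eapply Pmp. apply hh. apply P1.
Qed.

Lemma nni H a : PD H (FSup a (FNeg (FNeg a))).
Proof.
  eapply Pmp. apply dne. apply (P3 _ (FNeg (FNeg a)) a).
Qed.

Lemma contra H x y : PD H (FSup x y) -> PD H (FSup (FNeg y) (FNeg x)).
Proof.
  intro D. eapply Pmp. 2: apply (P3 _ (FNeg x) (FNeg y)).
  apply ded. eapply Pmp. 2: apply nni.
  eapply Pmp. 2: apply lift; exact D.
  eapply Pmp. apply hh. apply dne.
Qed.

Lemma andI H a b : PD H a -> PD H b -> PD H (FAnd a b).
Proof.
  intros Da Db. eapply Pmp. exact Db.
  eapply Pmp. 2: apply (P3 _ (FNeg (FSup a (FNeg b))) b).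
  apply ded. eapply Pmp. apply lift; exact Da.
  eapply Pmp. apply hh. apply dne.
Qed.

Lemma andE1 H a b : PD H (FAnd a b) -> PD H a.
Proof.
  intro D. eapply Pmp. 2: apply dne.
  eapply Pmp. exact D. apply contra. apply exfalso.
Qed.

Lemma andE2 H a b : PD H (FAnd a b) -> PD H b.
Proof.
  intro D. eapply Pmp. 2: apply dne.
  eapply Pmp. exact D. apply contra. apply P1.
Qed.

Lemma eqvLR H p q : PD H (FEqv p q) -> PD H p -> PD H q.
Proof. intros E D. eapply Pmp. exact D. eapply andE1. exact E. Qed.
Lemma eqvRL H p q : PD H (FEqv p q) -> PD H q -> PD H p.
Proof. intros E D. eapply Pmp. exact D. eapply andE2. exact E. Qed.

Lemma PD_sound G a : PD (Deriv G) a -> Deriv G a.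
Proof.
  intro D; induction D.
  - apply D_ax, A1.
  - apply D_ax, A2.
  - apply D_ax, A3.
  - auto.
  - exact (D_mp G _ _ IHD1 IHD2).
Qed.

Lemma toG G (HG : is_theory G) a : PD (Deriv G) a -> G a.
Proof. intro; apply HG, PD_sound; auto. Qed.
Lemma fromG G a : G a -> PD (Deriv G) a.
Proof. intro; apply Ph, D_hyp; auto. Qed.
Lemma axG G a : IsAxiom a -> PD (Deriv G) a.
Proof. intro; apply Ph, D_ax; auto. Qed.

Ltac pd G HG := apply (toG G HG).

Lemma prefl G (HG : is_theory G) a : G (FPrec a a).
Proof. apply HG, D_ax, O1. Qed.

Lemma ptrans G (HG : is_theory G) a b c :
  G (FPrec a b) -> G (FPrec b c) -> G (FPrec a c).
Proof.
  intros H1 H2. pd G HG. eapply Pmp. 2: apply axG, (O2 a b c).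
  apply andI; apply fromG; auto.
Qed.

Lemma pnegL G (HG : is_theory G) a b : G (FPrec a b) <-> G (FPrec (FNeg a) b).
Proof.
  pose proof (axG G _ (O4 a b)) as E. apply andE2 in E.
  split; intro H; pd G HG.
  - eapply eqvLR; [exact E| apply fromG; auto].
  - eapply eqvRL; [exact E| apply fromG; auto].
Qed.
Lemma pnegR G (HG : is_theory G) a b : G (FPrec a b) <-> G (FPrec a (FNeg b)).
Proof.
  pose proof (axG G _ (O4 a b)) as E. apply andE1 in E.
  split; intro H; pd G HG.
  - eapply eqvLR; [exact E| apply fromG; auto].
  - eapply eqvRL; [exact E| apply fromG; auto].
Qed.
Lemma pboxL G (HG : is_theory G) a b : G (FPrec a b) <-> G (FPrec (FBox a) b).
Proof.
  pose proof (axG G _ (O5 a b)) as E. apply andE2 in E.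
  split; intro H; pd G HG.
  - eapply eqvLR; [exact E| apply fromG; auto].
  - eapply eqvRL; [exact E| apply fromG; auto].
Qed.
Lemma pboxR G (HG : is_theory G) a b : G (FPrec a b) <-> G (FPrec a (FBox b)).
Proof.
  pose proof (axG G _ (O5 a b)) as E. apply andE1 in E.
  split; intro H; pd G HG.
  - eapply eqvLR; [exact E| apply fromG; auto].
  - eapply eqvRL; [exact E| apply fromG; auto].
Qed.

Lemma porL G (HG : is_theory G) a b c :
  G (FPrec a c) -> G (FPrec b c) -> G (FPrec (FOr a b) c).
Proof.
  intros H1 H2. pd G HG. eapply Pmp. 2: apply axG, C2.
  apply andI; apply fromG; auto.
Qed.
Lemma porR1 G (HG : is_theory G) a b : G (FPrec a (FOr a b)).
Proof. pd G HG. eapply andE1. apply axG, C1. Qed.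
Lemma porR2 G (HG : is_theory G) a b : G (FPrec b (FOr a b)).
Proof. pd G HG. eapply andE2. apply axG, C1. Qed.

Lemma pimp G (HG : is_theory G) a b c d :
  G (FPrec a c) -> G (FPrec c a) -> G (FPrec b d) -> G (FPrec d b) ->
  G (FPrec (FImp a b) (FImp c d)).
Proof.
  intros H1 H2 H3 H4. pd G HG. eapply Pmp. 2: apply axG, C3.
  repeat apply andI; apply fromG; auto.
Qed.

Lemma keyN G (HG : is_theory G) a : forall a', N a = N a' ->
  G (FPrec a a') /\ G (FPrec a' a).
Proof.
  induction a as [n|a1 IH1|a1 IH1|a1 IH1 a2 IH2|a1 IH1 a2 IH2]; intros a' E.
  - induction a' as [m|b1 J1|b1 J1|b1 J1 b2 J2|b1 J1 b2 J2]; simpl in E;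
      try discriminate.
    + inversion E; subst; split; apply prefl; auto.
    + destruct (J1 E); split; [apply (proj1 (pnegR G HG _ _))|apply (proj1 (pnegL G HG _ _))]; auto.
    + destruct (J1 E); split; [apply (proj1 (pboxR G HG _ _))|apply (proj1 (pboxL G HG _ _))]; auto.
  - destruct (IH1 a' E) as [X Y].
    split; [apply (proj1 (pnegL G HG _ _))|apply (proj1 (pnegR G HG _ _))]; auto.
  - destruct (IH1 a' E) as [X Y].
    split; [apply (proj1 (pboxL G HG _ _))|apply (proj1 (pboxR G HG _ _))]; auto.
  - induction a' as [m|b1 J1|b1 J1|b1 J1 b2 J2|b1 J1 b2 J2]; simpl in E;
      try discriminate.
    + destruct (J1 E); split; [apply (proj1 (pnegR G HG _ _))|apply (proj1 (pnegL G HG _ _))]; auto.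
    + destruct (J1 E); split; [apply (proj1 (pboxR G HG _ _))|apply (proj1 (pboxL G HG _ _))]; auto.
    + inversion E as [[E1 E2]].
      destruct (IH1 b1 E1) as [X1 Y1]; destruct (IH2 b2 E2) as [X2 Y2]; split;
        apply porL; auto.
      * eapply ptrans; eauto. apply porR1; auto.
      * eapply ptrans; eauto. apply porR2; auto.
      * eapply ptrans; eauto. apply porR1; auto.
      * eapply ptrans; eauto. apply porR2; auto.
  - induction a' as [m|b1 J1|b1 J1|b1 J1 b2 J2|b1 J1 b2 J2]; simpl in E;
      try discriminate.
    + destruct (J1 E); split; [apply (proj1 (pnegR G HG _ _))|apply (proj1 (pnegL G HG _ _))]; auto.
    + destruct (J1 E); split; [apply (proj1 (pboxR G HG _ _))|apply (proj1 (pboxL G HG _ _))]; auto.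
    + inversion E as [[E1 E2]].
      destruct (IH1 b1 E1) as [X1 Y1]; destruct (IH2 b2 E2) as [X2 Y2]; split;
        apply pimp; auto.
Qed.

Lemma leG_iff G (HG : is_theory G) a b : leG G (N a) (N b) <-> G (FPrec a b).
Proof.
  split.
  - intros [a' [b' [E1 [E2 H]]]].
    destruct (keyN G HG a a' (eq_sym E1)) as [X _].
    destruct (keyN G HG b' b E2) as [Y _].
    eapply ptrans; eauto. eapply ptrans; eauto.
  - intro H. exists a, b; auto.
Qed.

Theorem mainTheorem11 (G : Fm -> Prop) (HG : is_theory G) (phi psi : Fm) :
  (qle G (cls G (N phi)) (cls G (N psi)) <-> leG G (N phi) (N psi)) /\
  (leG G (N phi) (N psi) <-> G (FPrec phi psi)).
Proof.
  split; [|apply leG_iff; auto].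
  rewrite leG_iff by auto. split.
  - intro Q.
    assert (Hs : qoplus G (cls G (N phi)) (cls G (N psi)) (N psi)).
    { unfold qle in Q. rewrite Q. unfold cls, simG, inNFm.
      split; [eauto|]. split; apply leG_iff; auto; apply prefl; auto. }
    unfold qoplus, cls, simG, inNFm in Hs.
    destruct Hs as [x [y [[[a Ea] [L1 L2]] [[[b Eb] [L3 L4]] [_ [L5 L6]]]]]].
    subst x y. change (TOplus (N a) (N b)) with (N (FOr a b)) in *.
    rewrite leG_iff in * by auto.
    apply (ptrans G HG phi a psi L1). apply (ptrans G HG a (FOr a b) psi); [apply porR1; auto | exact L5].
  - intro P. unfold qle, qoplus, cls, simG, inNFm.
    apply functional_extensionality; intro s.
    apply propositional_extensionality. split.
    + intros [x [y [[[a Ea] [L1 L2]] [[[b Eb] [L3 L4]] [[c Ec] [L5 L6]]]]]].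
      subst x y s. change (TOplus (N a) (N b)) with (N (FOr a b)) in *.
      rewrite leG_iff in * by auto.
      split; [eauto|]. split.
      * exact (ptrans G HG _ _ _ L3 (ptrans G HG _ _ _ (porR2 G HG a b) L5)).
      * apply (proj2 (leG_iff G HG _ _)); exact (ptrans G HG _ _ _ L6 (porL G HG _ _ _ (ptrans G HG _ _ _ L2 P) L4)).
    + intros [[c Ec] [L1 L2]]. subst s. rewrite leG_iff in * by auto.
      exists (N phi), (N psi).
      split; [split; [eauto| split; apply leG_iff; auto; apply prefl; auto]|].
      split; [split; [eauto| split; apply leG_iff; auto; apply prefl; auto]|].
      change (TOplus (N phi) (N psi)) with (N (FOr phi psi)).
      split; [eauto|]. split; apply (proj2 (leG_iff G HG _ _)).
      * exact (ptrans G HG _ _ _ (porL G HG _ _ _ P (prefl G HG psi)) L1).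
      * exact (ptrans G HG _ _ _ L2 (porR2 G HG phi psi)).
Qed.
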